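(* Let $\mathcal{W}\subseteq\{x\in\mathbb{R}^d:\|x\|_2\le1\}$ be closed convex with $0\in\mathcal{W}$, let $f_1,\dots,f_T$ be convex differentiable with $L$-Lipschitz gradients on $\mathcal{W}$, set $f_0\equiv0$, $x_0=z_0=0$, fix $\eta>0$, and for $t=1,\dots,T$ let $$x_t=\arg\min_{x\in\mathcal{W}}\Bigl\{\langle x,\nabla f_{t-1}(x_{t-1})\rangle+\tfrac{L}{2\eta}\|x-z_{t-1}\|_2^2\Bigr\},\qquad z_t=\arg\min_{x\in\mathcal{W}}\Bigl\{\langle x,\nabla f_t(x_t)\rangle+\tfrac{L}{2\eta}\|x-z_{t-1}\|_2^2\Bigr\}.$$ Let $\mathrm{EGV}_{T,2}=\sum_{t=0}^{T-1}\|\nabla f_{t+1}(x_t)-\nabla f_t(x_t)\|_2^2$. If $\eta=\frac12\min\{1/\sqrt2,\,L/\sqrt{\mathrm{EGV}_{T,2}}\}$, then $$\sum_{t=1}^T f_t(x_t)-\min_{x\in\mathcal{W}}\sum_{t=1}^T f_t(x)\le 2\max\{\sqrt2 L,\sqrt{\mathrm{EGV}_{T,2}}\}.$$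
   Context: The pair of updates is the online mirror prox (OMP) algorithm with Euclidean geometry; $x_t$ is played before $f_t$ is revealed. $\mathrm{EGV}_{T,2}$ is computed along the run of the algorithm with the given $\eta$. *)

(* Defs.v *)
From Stdlib Require Import Reals.
Open Scope R_scope.

(* Vectors of R^d are represented as functions nat -> R; only the
   coordinates 0..d-1 matter, and a genuine point of R^d is one whose
   coordinates >= d vanish (predicate [inRd]). *)
Definition vec := nat -> R.

Definition inRd (d : nat) (x : vec) : Prop := forall i, (d <= i)%nat -> x i = 0.

Fixpoint sumR (n : nat) (f : nat -> R) : R :=
  match n with
  | O => 0
  | S m => sumR m f + f m
  end.

Definition vzero : vec := fun _ => 0.
Definition vadd (x y : vec) : vec := fun i => x i + y i.
Definition vsub (x y : vec) : vec := fun i => x i - y i.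
Definition vscale (a : R) (x : vec) : vec := fun i => a * x i.

Definition inner (d : nat) (x y : vec) : R := sumR d (fun i => x i * y i).
Definition norm2 (d : nat) (x : vec) : R := sqrt (inner d x x).

Definition W_convex_set (d : nat) (W : vec -> Prop) : Prop :=
  forall x y lam, W x -> W y -> 0 <= lam <= 1 ->
    W (vadd (vscale lam x) (vscale (1 - lam) y)).

Definition W_closed_set (d : nat) (W : vec -> Prop) : Prop :=
  forall (u : nat -> vec) (x : vec), (forall n, W (u n)) -> inRd d x ->
    (forall eps, eps > 0 -> exists N, forall n, (N <= n)%nat ->
        norm2 d (vsub (u n) x) < eps) ->
    W x.

Definition convex_fun (d : nat) (f : vec -> R) : Prop :=
  forall x y lam, inRd d x -> inRd d y -> 0 <= lam <= 1 ->
    f (vadd (vscale lam x) (vscale (1 - lam) y)) <= lam * f x + (1 - lam) * f y.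

Definition is_gradient (d : nat) (f : vec -> R) (g x : vec) : Prop :=
  forall eps, eps > 0 -> exists delta, delta > 0 /\
    forall y, inRd d y -> norm2 d (vsub y x) < delta ->
      Rabs (f y - f x - inner d g (vsub y x)) <= eps * norm2 d (vsub y x).

Definition is_argmin (W : vec -> Prop) (phi : vec -> R) (x : vec) : Prop :=
  W x /\ forall y, W y -> phi x <= phi y.

(* step size eta = 1/2 * min{1/sqrt 2, L / sqrt EGV}, with L / sqrt 0 = +infinity *)
Definition eta_choice (L EGV : R) : R :=
  if Rle_dec EGV 0 then / 2 * / sqrt 2
  else / 2 * Rmin (/ sqrt 2) (L / sqrt EGV).

(* Main.v *)
Require Import Defs.
From Stdlib Require Import Reals Lra Lia Psatz.
Open Scope R_scope.

Ltac vecid d := intros; unfold inner, vsub, vadd, vscale, vzero;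
  induction d as [|d IH]; simpl in *; [field | rewrite IH; field].

Lemma Q_nn d v : 0 <= inner d v v.
Proof. unfold inner; induction d; simpl; [lra| nra]. Qed.

Lemma n2sq d v : norm2 d v ^ 2 = inner d v v.
Proof. unfold norm2. simpl. rewrite Rmult_1_r. apply sqrt_sqrt, Q_nn. Qed.

Lemma I_tp d p q r : inner d (vsub p q) (vsub r p) =
  /2 * (inner d (vsub r q) (vsub r q) - inner d (vsub r p) (vsub r p) - inner d (vsub p q) (vsub p q)).
Proof. vecid d. Qed.

Lemma I_decomp d gh x u zt M : inner d gh (vsub x u) =
  - inner d (vsub u zt) gh + inner d (vsub gh M) (vsub x zt) - inner d (vsub zt x) M.
Proof. vecid d. Qed.

Lemma I_I2 d x zp zt : inner d (vsub x zp) (vsub zt x) =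
   - inner d (vsub x zt) (vsub x zt) - inner d (vsub zt zp) (vsub x zt).
Proof. vecid d. Qed.

Lemma I_ab d gh M x zt : inner d (vsub gh M) (vsub x zt) = inner d (vsub x zt) gh + inner d (vsub zt x) M.
Proof. vecid d. Qed.

Lemma I_sq d a b k : inner d (vsub a (vscale k b)) (vsub a (vscale k b)) =
  inner d a a - 2 * k * inner d a b + k^2 * inner d b b.
Proof. vecid d. Qed.

Lemma I_par d p q r : inner d (vsub p r) (vsub p r) = 2 * inner d (vsub p q) (vsub p q)
  + 2 * inner d (vsub q r) (vsub q r) - inner d (vsub (vsub p q) (vsub q r)) (vsub (vsub p q) (vsub q r)).
Proof. vecid d. Qed.

Lemma par_le d p q r : inner d (vsub p r) (vsub p r) <= 2 * inner d (vsub p q) (vsub p q)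
  + 2 * inner d (vsub q r) (vsub q r).
Proof. rewrite (I_par d p q r). pose proof (Q_nn d (vsub (vsub p q) (vsub q r))). lra. Qed.

Lemma test (c a b e: R) : a <= c * b -> b <= e -> 0 <= c -> a <= c * e.
Proof. intros. Fail lra. nra. Qed.
Lemma test2 (c a b: R) : a <= c * b -> c*b <= 3 -> a <= 3.
Proof. intros. lra. Qed.

Lemma I_lin d w x M lam : inner d (vadd (vscale lam w) (vscale (1 - lam) x)) M =
  lam * inner d w M + (1 - lam) * inner d x M.
Proof. vecid d. Qed.

Lemma I_lsq d w x z lam :
  inner d (vsub (vadd (vscale lam w) (vscale (1 - lam) x)) z) (vsub (vadd (vscale lam w) (vscale (1 - lam) x)) z)
  = inner d (vsub x z) (vsub x z) + 2 * lam * inner d (vsub x z) (vsub w x) + lam ^ 2 * inner d (vsub w x) (vsub w x).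
Proof. vecid d. Qed.

Lemma I_wx d w x M : inner d (vsub w x) M = inner d w M - inner d x M.
Proof. vecid d. Qed.

Lemma argmin_vi d W M z c x :
  W_convex_set d W -> 0 <= c ->
  is_argmin W (fun w => inner d w M + c * (norm2 d (vsub w z)) ^ 2) x ->
  forall w, W w -> 0 <= inner d (vsub w x) M + 2 * c * inner d (vsub x z) (vsub w x).
Proof.
  intros Hc Hc0 [Wx Hmin] w Ww.
  set (V := inner d (vsub w x) M + 2 * c * inner d (vsub x z) (vsub w x)).
  set (K := inner d (vsub w x) (vsub w x)).
  assert (HK : 0 <= K) by apply Q_nn.
  assert (H : forall lam, 0 < lam <= 1 -> 0 <= V + c * lam * K).
  { intros lam Hl.
    pose proof (Hmin _ (Hc w x lam Ww Wx ltac:(lra))) as Hm.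
    cbv beta in Hm. rewrite !n2sq, I_lin, I_lsq in Hm.
    unfold V. rewrite I_wx.
    fold K in Hm.
    assert (0 <= lam * (inner d w M - inner d x M + 2 * c * inner d (vsub x z) (vsub w x) + c * lam * K)) by nra.
    apply Rmult_le_reg_l with lam; [lra|]. rewrite Rmult_0_r. exact H. }
  destruct (Rle_or_lt 0 V) as [|HV]; [exact H0|exfalso].
  set (D := c * K - V + 1).
  assert (HD : 0 < D) by (unfold D; nra).
  set (lam := - V / D).
  assert (Hl : lam * D = - V) by (unfold lam; field; lra).
  assert (Hl0 : 0 < lam) by (unfold lam; apply Rdiv_lt_0_compat; lra).
  assert (Hl1 : lam <= 1).
  { apply Rmult_le_reg_r with D; [lra|]. rewrite Hl. unfold D. nra. }
  pose proof (H lam (conj Hl0 Hl1)).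
  assert (0 <= (V + c * lam * K) * D) by nra.
  assert ((V + c * lam * K) * D = V - V * V).
  { transitivity (V * D + c * K * (lam * D)); [ring|]. rewrite Hl. unfold D. ring. }
  nra.
Qed.

Lemma I_cg1 d g x u lam : inner d g (vsub (vadd (vscale lam u) (vscale (1 - lam) x)) x)
  = - lam * inner d g (vsub x u).
Proof. vecid d. Qed.

Lemma I_cg2 d x u lam : inner d (vsub (vadd (vscale lam u) (vscale (1 - lam) x)) x)
   (vsub (vadd (vscale lam u) (vscale (1 - lam) x)) x)
  = lam ^ 2 * inner d (vsub u x) (vsub u x).
Proof. vecid d. Qed.

Lemma inRd_comb d x u lam : inRd d x -> inRd d u -> inRd d (vadd (vscale lam u) (vscale (1 - lam) x)).
Proof. unfold inRd, vadd, vscale. intros Hx Hu i Hi. rewrite Hx, Hu by exact Hi. ring. Qed.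

Lemma conv_grad d f gx x u : convex_fun d f -> is_gradient d f gx x -> inRd d x -> inRd d u ->
  f x - f u <= inner d gx (vsub x u).
Proof.
  intros Hc Hg Hx Hu.
  set (N := norm2 d (vsub u x)). set (G := inner d gx (vsub x u)).
  assert (HN : 0 <= N) by apply sqrt_pos.
  assert (Heps : forall eps, eps > 0 -> f x - f u <= G + eps * N).
  { intros eps He. destruct (Hg eps He) as [del [Hd Hy]].
    set (lam := del / (del + N + 1)).
    assert (Hl0 : 0 < lam) by (unfold lam; apply Rdiv_lt_0_compat; lra).
    assert (HlD : lam * (del + N + 1) = del) by (unfold lam; field; lra).
    assert (Hl1 : lam <= 1) by nra.
    set (y := vadd (vscale lam u) (vscale (1 - lam) x)).
    assert (Hny : norm2 d (vsub y x) = lam * N).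
    { unfold norm2, y. rewrite I_cg2, sqrt_mult_alt.
      - rewrite sqrt_pow2 by lra. reflexivity.
      - apply pow2_ge_0. }
    assert (Hlt : norm2 d (vsub y x) < del) by (rewrite Hny; nra).
    pose proof (Hy y (inRd_comb d x u lam Hx Hu) Hlt) as Hab.
    rewrite Hny in Hab. unfold y in Hab. rewrite I_cg1 in Hab. fold G in Hab.
    pose proof (Hc u x lam Hu Hx ltac:(lra)) as Hcv. fold y in Hcv. unfold y in Hab.
    pose proof (Rle_abs (- (f y - f x - - lam * G))) as Hra. rewrite Rabs_Ropp in Hra. unfold y in Hra.
    unfold y in Hcv. assert (lam * (f x - f u) <= lam * (G + eps * N)) by lra.
    apply Rmult_le_reg_l with lam; lra. }
  destruct (Rle_or_lt (f x - f u) G) as [|Hlt]; [assumption|exfalso].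
  set (eps := (f x - f u - G) / (2 * (N + 1))).
  assert (He : eps > 0) by (unfold eps; apply Rdiv_lt_0_compat; lra).
  pose proof (Heps eps He).
  assert (eps * (2 * (N + 1)) = f x - f u - G) by (unfold eps; field; lra).
  nra.
Qed.

Lemma step d (W : vec -> Prop) c L u x xp zp zt gh M gp :
  0 < c -> 2 * L ^ 2 <= c ^ 2 -> W u -> W x -> W zt ->
  (forall w, W w -> 0 <= inner d (vsub w x) M + 2 * c * inner d (vsub x zp) (vsub w x)) ->
  (forall w, W w -> 0 <= inner d (vsub w zt) gh + 2 * c * inner d (vsub zt zp) (vsub w zt)) ->
  inner d (vsub gh gp) (vsub gh gp) <= L ^ 2 * inner d (vsub x xp) (vsub x xp) ->
  inner d gh (vsub x u) + c * (inner d (vsub u zt) (vsub u zt) + inner d (vsub zt x) (vsub zt x))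
  <= c * (inner d (vsub u zp) (vsub u zp) + inner d (vsub zp xp) (vsub zp xp))
     + inner d (vsub gp M) (vsub gp M) / c.
Proof.
  intros Hc HL Wu Wx Wzt VIx VIz Hlip.
  pose proof (VIz u Wu) as F1. pose proof (VIx zt Wzt) as F2. pose proof (VIz x Wx) as F3.
  rewrite I_tp in F1. pose proof (I_tp d x zp zt) as T2'. pose proof (I_I2 d x zp zt) as T3'.
  pose proof (I_ab d gh M x zt) as Hab. pose proof (I_decomp d gh x u zt M) as Hdec.
  set (a := vsub gh M) in *. set (b := vsub x zt) in *.
  assert (Hab2 : 2 * c * inner d b b <= inner d a b).
  { assert (c * inner d b b = - c * (inner d (vsub x zp) (vsub zt x) + inner d (vsub zt zp) b)) by (rewrite T3'; ring).
    lra. }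
  assert (HQ : 2 * c * inner d a b <= inner d a a).
  { pose proof (Q_nn d (vsub a (vscale (2 * c) b))) as H. rewrite I_sq in H.
    assert (2 * c * (2 * c * inner d b b) <= 2 * c * inner d a b) by (apply Rmult_le_compat_l; lra).
    lra. }
  assert (Hqa : inner d a a <= 2 * c ^ 2 * (inner d (vsub x zp) (vsub x zp) + inner d (vsub zp xp) (vsub zp xp))
     + 2 * inner d (vsub gp M) (vsub gp M)).
  { pose proof (par_le d gh gp M) as P1. pose proof (par_le d x zp xp) as P2.
    pose proof (Q_nn d (vsub x zp)). pose proof (Q_nn d (vsub zp xp)).
    assert (L ^ 2 * inner d (vsub x xp) (vsub x xp) <= L^2 * (2 * inner d (vsub x zp) (vsub x zp) + 2 * inner d (vsub zp xp) (vsub zp xp)))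
      by (apply Rmult_le_compat_l; [apply pow2_ge_0|lra]).
    assert ((2 * c^2 - 4 * L^2) * (inner d (vsub x zp) (vsub x zp) + inner d (vsub zp xp) (vsub zp xp)) >= 0)
      by (apply Rle_ge, Rmult_le_pos; lra).
    fold a in P1. lra. }
  assert (Hab3 : inner d a b <= c * (inner d (vsub x zp) (vsub x zp) + inner d (vsub zp xp) (vsub zp xp))
     + inner d (vsub gp M) (vsub gp M) / c).
  { apply Rmult_le_reg_l with (2 * c); [lra|].
    replace (2 * c * (c * (inner d (vsub x zp) (vsub x zp) + inner d (vsub zp xp) (vsub zp xp)) +
      inner d (vsub gp M) (vsub gp M) / c)) with
      (2 * c ^ 2 * (inner d (vsub x zp) (vsub x zp) + inner d (vsub zp xp) (vsub zp xp))
     + 2 * inner d (vsub gp M) (vsub gp M)) by (field; lra).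
    lra. }
  assert (c * inner d (vsub x zp) (vsub zt x) = c * (/ 2 * (inner d (vsub zt zp) (vsub zt zp) - inner d (vsub zt x) (vsub zt x) -
        inner d (vsub x zp) (vsub x zp)))) by (rewrite T2'; ring).
  lra.
Qed.

Lemma sumR_diff_le n F G H : (forall s, (s < n)%nat -> F s - G s <= H s) ->
  sumR n F - sumR n G <= sumR n H.
Proof. induction n; simpl; intros Hs; [lra|].
  pose proof (Hs n (Nat.lt_succ_diag_r n)). assert (sumR n F - sumR n G <= sumR n H) by (apply IHn; intros; apply Hs; lia). lra. Qed.

Lemma sumR_nn n F : (forall s, 0 <= F s) -> 0 <= sumR n F.
Proof. intros H; induction n; simpl; [lra| pose proof (H n); lra]. Qed.

Lemma sumR_div n F c : sumR n (fun s => F s / c) = sumR n F / c.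
Proof. induction n; simpl; [unfold Rdiv; ring | rewrite IHn; unfold Rdiv; ring]. Qed.

Lemma sumR_ext n F G : (forall s, F s = G s) -> sumR n F = sumR n G.
Proof. intros H; induction n; simpl; [reflexivity | rewrite IHn, H; reflexivity]. Qed.

Lemma I_z0 d u : inner d (vsub u vzero) (vsub u vzero) = inner d u u.
Proof. vecid d. Qed.
Lemma I_00 d : inner d (vsub vzero vzero) (vsub vzero vzero) = 0.
Proof. vecid d. Qed.

Lemma final_num L E eta : 0 < L -> 0 <= E -> eta = eta_choice L E ->
  0 < eta /\ 2 * L ^ 2 <= (L / (2 * eta)) ^ 2 /\
  L / (2 * eta) + E / (L / (2 * eta)) <= 2 * Rmax (sqrt 2 * L) (sqrt E).
Proof.
  intros HL HE He.
  assert (Hs2 : 0 < sqrt 2) by (apply sqrt_lt_R0; lra).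
  assert (Hs22 : sqrt 2 * sqrt 2 = 2) by (apply sqrt_sqrt; lra).
  assert (Hmx1 := Rmax_l (sqrt 2 * L) (sqrt E)).
  assert (Hmx2 := Rmax_r (sqrt 2 * L) (sqrt E)).
  unfold eta_choice in He. destruct (Rle_dec E 0) as [HE0|HE0].
  - assert (E = 0) by lra. subst E eta.
    assert (Hc : L / (2 * (/ 2 * / sqrt 2)) = sqrt 2 * L) by (field; lra).
    rewrite Hc. split; [apply Rmult_lt_0_compat; apply Rinv_0_lt_compat; lra|]. split.
    + replace ((sqrt 2 * L) ^ 2) with (sqrt 2 * sqrt 2 * L ^ 2) by ring. rewrite Hs22; lra.
    + unfold Rdiv. rewrite Rmult_0_l. nra.
  - assert (HsE : 0 < sqrt E) by (apply sqrt_lt_R0; lra).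
    assert (HsEE : sqrt E * sqrt E = E) by (apply sqrt_sqrt; lra).
    unfold Rmin in He. destruct (Rle_dec (/ sqrt 2) (L / sqrt E)) as [Hm|Hm]; subst eta.
    + assert (Hc : L / (2 * (/ 2 * / sqrt 2)) = sqrt 2 * L) by (field; lra).
      rewrite Hc. split; [apply Rmult_lt_0_compat; apply Rinv_0_lt_compat; lra|]. split.
      * replace ((sqrt 2 * L) ^ 2) with (sqrt 2 * sqrt 2 * L ^ 2) by ring. rewrite Hs22; lra.
      * assert (Hle : sqrt E <= sqrt 2 * L).
        { apply Rmult_le_reg_r with (/ sqrt 2 * / sqrt E). apply Rmult_lt_0_compat; apply Rinv_0_lt_compat; lra.
          replace (sqrt E * (/ sqrt 2 * / sqrt E)) with (/ sqrt 2) by (field; lra).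
          replace (sqrt 2 * L * (/ sqrt 2 * / sqrt E)) with (L / sqrt E) by (field; lra). exact Hm. }
        assert (E / (sqrt 2 * L) <= sqrt E).
        { apply Rmult_le_reg_r with (sqrt 2 * L). nra.
          replace (E / (sqrt 2 * L) * (sqrt 2 * L)) with E by (field; lra). nra. }
        lra.
    + assert (Hlt : L / sqrt E < / sqrt 2) by lra.
      assert (Hc : L / (2 * (/ 2 * (L / sqrt E))) = sqrt E) by (field; lra).
      assert (HLE : 0 < L / sqrt E) by (apply Rdiv_lt_0_compat; lra).
      rewrite Hc. split; [lra|]. split.
      * assert (Hle : sqrt 2 * L <= sqrt E).
        { apply Rmult_le_reg_r with (/ sqrt 2 * / sqrt E). apply Rmult_lt_0_compat; apply Rinv_0_lt_compat; lra.
          replace (sqrt E * (/ sqrt 2 * / sqrt E)) with (/ sqrt 2) by (field; lra).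
          replace (sqrt 2 * L * (/ sqrt 2 * / sqrt E)) with (L / sqrt E) by (field; lra). lra. }
        replace (2 * L ^ 2) with ((sqrt 2 * L) ^ 2) by (replace ((sqrt 2 * L) ^ 2) with (sqrt 2 * sqrt 2 * L ^ 2) by ring; rewrite Hs22; ring).
        assert (0 <= sqrt 2 * L) by nra. nra.
      * replace (E / sqrt E) with (sqrt E) by (rewrite <- HsEE at 2; field; lra). lra.
Qed.

Theorem mainTheorem4
  (d : nat) (W : vec -> Prop) (L : R) (T : nat)
  (f : nat -> vec -> R) (g : nat -> vec -> vec) (x z : nat -> vec)
  (hW_Rd : forall w, W w -> inRd d w)
  (hW_ball : forall w, W w -> norm2 d w <= 1)
  (hW_convex : W_convex_set d W)
  (hW_closed : W_closed_set d W)
  (hW0 : W vzero)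
  (hL : 0 < L)
  (hf0 : forall w, f 0%nat w = 0)
  (hconv : forall t, (1 <= t <= T)%nat -> convex_fun d (f t))
  (hgrad : forall t w, (t <= T)%nat -> inRd d w -> is_gradient d (f t) (g t w) w)
  (hlip : forall t u v, (1 <= t <= T)%nat -> W u -> W v ->
     norm2 d (vsub (g t u) (g t v)) <= L * norm2 d (vsub u v))
  (hx0 : x 0%nat = vzero) (hz0 : z 0%nat = vzero)
  (hx : forall t, (1 <= t <= T)%nat ->
     is_argmin W (fun w => inner d w (g (t - 1)%nat (x (t - 1)%nat))
        + L / (2 * eta_choice L (sumR T (fun s => (norm2 d (vsub (g (S s) (x s)) (g s (x s)))) ^ 2)))
          * (norm2 d (vsub w (z (t - 1)%nat))) ^ 2) (x t))
  (hz : forall t, (1 <= t <= T)%nat ->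
     is_argmin W (fun w => inner d w (g t (x t))
        + L / (2 * eta_choice L (sumR T (fun s => (norm2 d (vsub (g (S s) (x s)) (g s (x s)))) ^ 2)))
          * (norm2 d (vsub w (z (t - 1)%nat))) ^ 2) (z t)) :
  let EGV := sumR T (fun s => (norm2 d (vsub (g (S s) (x s)) (g s (x s)))) ^ 2) in
  forall u, W u ->
    sumR T (fun s => f (S s) (x (S s))) - sumR T (fun s => f (S s) u)
      <= 2 * Rmax (sqrt 2 * L) (sqrt EGV).
Proof.
  intros EGV u Hu.
  assert (HE0 : 0 <= EGV) by (apply sumR_nn; intros; apply pow2_ge_0).
  destruct (final_num L EGV (eta_choice L EGV) hL HE0 eq_refl) as [Heta [Hc2 Hfin]].
  set (c := L / (2 * eta_choice L EGV)) in *.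
  assert (Hc : 0 < c) by (unfold c; apply Rdiv_lt_0_compat; lra).
  assert (HWxz : forall t, (t <= T)%nat -> W (x t) /\ W (z t)).
  { intros [|t] Ht; [rewrite hx0, hz0; auto|].
    split; [apply (hx (S t) ltac:(lia)) | apply (hz (S t) ltac:(lia))]. }
  set (E := fun s => inner d (vsub (g (S s) (x s)) (g s (x s))) (vsub (g (S s) (x s)) (g s (x s)))).
  set (Phi := fun t => c * (inner d (vsub u (z t)) (vsub u (z t)) + inner d (vsub (z t) (x t)) (vsub (z t) (x t)))).
  set (r := fun s => inner d (g (S s) (x (S s))) (vsub (x (S s)) u)).
  assert (Hstep : forall s, (s < T)%nat -> r s + Phi (S s) <= Phi s + E s / c).
  { intros s Hs. unfold r, Phi, E.
    destruct (HWxz s ltac:(lia)) as [Wxs Wzs]. destruct (HWxz (S s) ltac:(lia)) as [Wxs' Wzs'].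
    apply (step d W c L u (x (S s)) (x s) (z s) (z (S s)) (g (S s) (x (S s))) (g s (x s)) (g (S s) (x s)));
      auto.
    - intros w Ww. apply (argmin_vi d W (g s (x s)) (z s) c (x (S s))); auto; [lra|].
      pose proof (hx (S s) ltac:(lia)) as H. simpl in H. rewrite Nat.sub_0_r in H. exact H.
    - intros w Ww. apply (argmin_vi d W (g (S s) (x (S s))) (z s) c (z (S s))); auto; [lra|].
      pose proof (hz (S s) ltac:(lia)) as H. simpl in H. rewrite Nat.sub_0_r in H. exact H.
    - pose proof (hlip (S s) (x (S s)) (x s) ltac:(lia) Wxs' Wxs) as H.
      rewrite <- !n2sq. rewrite <- Rpow_mult_distr.
      apply pow_incr. split; [apply sqrt_pos| exact H]. }
  assert (Hind : forall n, (n <= T)%nat -> sumR n r + Phi n <= Phi 0%nat + sumR n (fun s => E s / c)).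
  { induction n as [|n IH]; intros Hn; simpl; [lra|].
    pose proof (IH ltac:(lia)). pose proof (Hstep n ltac:(lia)). lra. }
  pose proof (Hind T (le_n T)) as HT.
  rewrite sumR_div in HT.
  assert (HEs : sumR T E = EGV) by (apply sumR_ext; intros s; unfold E; rewrite n2sq; reflexivity).
  rewrite HEs in HT.
  assert (HPT : 0 <= Phi T) by (unfold Phi; pose proof (Q_nn d (vsub u (z T))); pose proof (Q_nn d (vsub (z T) (x T))); nra).
  assert (HP0 : Phi 0%nat <= c).
  { unfold Phi. rewrite hx0, hz0, I_z0, I_00. rewrite <- n2sq.
    pose proof (hW_ball u Hu). pose proof (sqrt_pos (inner d u u)).
    assert (norm2 d u ^ 2 <= 1) by (unfold norm2 in *; nra). nra. }
  assert (Hreg : sumR T (fun s => f (S s) (x (S s))) - sumR T (fun s => f (S s) u) <= sumR T r).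
  { apply sumR_diff_le. intros s Hs. unfold r.
    destruct (HWxz (S s) ltac:(lia)) as [Wx _].
    apply conv_grad; auto. apply hconv; lia. }
  lra.
Qed.
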